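(* Let $N=2^n$, let $u$ be a uniformly random permutation of $\{0,\dots,N-1\}$, let $g$ be an arbitrary function on permutations, fix $\delta>0$, $\gamma=2^{-m}>0$ and a value $r'$ with $\Pr[g(u)=r']\ge\gamma$. Let $t$ denote $u$ conditioned on $g(u)=r'$. Then there are finitely many distributions $\mathbb{F}_1,\mathbb{F}_2,\dots$ on permutations, each $(p,\delta)$ non-uniform with $p=2m/\delta$, an arbitrary distribution $\mathbb{F}'$ on permutations, and nonnegative weights $\alpha_i,\gamma'$ with $\sum_i\alpha_i+\gamma'=1$ and $\gamma'\le\gamma$, such that the distribution of $t$ equals $\sum_i\alpha_i\mathbb{F}_i+\gamma'\mathbb{F}'$.
   Context: A part is a set $S=\{(x_i,y_i)\}_{i=1}^M$ ($M\le N$) such that some permutation $\pi$ of $\{0,\dots,N-1\}$ satisfies $\pi(x_i)=y_i$ for all $i$; for a permutation $t$, $\mathrm{parts}(t)=\{(x,t(x))\}_x$ and ''$S\subseteq\mathrm{parts}(t)$'' means $t(x_i)=y_i$ for all $i$. Two parts $S,S'$ are distinct if they share no input $x$ and $S\cup S'$ is again a part. For uniform $u$, $\Pr[S\subseteq\mathrm{parts}(u)]=(N-|S|)!/N!$. A distribution of a random permutation $t$ is $\delta$ non-uniform if $\Pr[S\subseteq\mathrm{parts}(t)]\le2^{\delta|S|}\Pr[S\subseteq\mathrm{parts}(u)]$ for every part $S$. It is $(p,\delta)$ non-uniform if there is a part $S_0$ with $|S_0|\le p$ and $\Pr[S_0\subseteq\mathrm{parts}(t)]=1$ such that for every part $S$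 distinct from $S_0$, $\Pr[S\subseteq\mathrm{parts}(t)]\le2^{\delta|S|}\Pr[S\subseteq\mathrm{parts}(u)\mid S_0\subseteq\mathrm{parts}(u)]$, where $\Pr[S\subseteq\mathrm{parts}(u)\mid S_0\subseteq\mathrm{parts}(u)]=(N-|S_0|-|S|)!/(N-|S_0|)!$. *)

(* Defs.v *)
From HB Require Import structures.
From mathcomp Require Import all_boot all_order all_algebra all_fingroup.
From mathcomp Require Import reals exp.
Set Implicit Arguments. Unset Strict Implicit. Unset Printing Implicit Defensive.
Import Order.TTheory GRing.Theory Num.Theory.
Local Open Scope ring_scope.

Section Defs.
Variable R : realType.
Variable N : nat.

Definition perm_dist (D : {perm 'I_N} -> R) : Prop :=
  (forall s, 0 <= D s) /\ \sum_(s : {perm 'I_N}) D s = 1.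

Definition in_parts (S : {set 'I_N * 'I_N}) (s : {perm 'I_N}) : bool :=
  [forall xy in S, s xy.1 == xy.2].

Definition is_part (S : {set 'I_N * 'I_N}) : bool :=
  [exists s : {perm 'I_N}, in_parts S s].

Definition distinct_parts (S S' : {set 'I_N * 'I_N}) : bool :=
  [forall xy in S, forall xy' in S', xy.1 != xy'.1] && is_part (S :|: S').

Definition prob_part (D : {perm 'I_N} -> R) (S : {set 'I_N * 'I_N}) : R :=
  \sum_(s : {perm 'I_N} | in_parts S s) D s.

(* Pr[S \subseteq parts(u) | S0 \subseteq parts(u)] for uniform u *)
Definition unif_cond (S0 S : {set 'I_N * 'I_N}) : R :=
  (N - #|S0| - #|S|)`!%:R / (N - #|S0|)`!%:R.

Definition pd_nonuniform (p delta : R) (D : {perm 'I_N} -> R) : Prop :=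
  exists S0 : {set 'I_N * 'I_N},
    [/\ is_part S0, (#|S0|%:R <= p), prob_part D S0 = 1 &
        forall S : {set 'I_N * 'I_N}, is_part S -> distinct_parts S S0 ->
          prob_part D S <= powR 2 (delta * #|S|%:R) * unif_cond S0 S].

Definition cond_unif (T : eqType) (g : {perm 'I_N} -> T) (r' : T)
  : {perm 'I_N} -> R :=
  fun s => (g s == r')%:R / #|[set s' : {perm 'I_N} | g s' == r']|%:R.

Definition prob_eq (T : eqType) (g : {perm 'I_N} -> T) (r' : T) : R :=
  #|[set s' : {perm 'I_N} | g s' == r']|%:R / (N`!)%:R.

End Defs.

(* Main.v *)
Require Import Defs.
From HB Require Import structures.
From mathcomp Require Import all_boot all_order all_algebra all_fingroup.
From mathcomp Require Import reals exp.
From mathcomp Require Import ring lra zify.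
Import Order.TTheory GRing.Theory Num.Theory.
Local Open Scope ring_scope.
Set Implicit Arguments. Unset Strict Implicit.

Section Helpers.
Variable R : realType.
Variable N : nat.

Definition ext (X : {set 'I_N * 'I_N}) : {set {perm 'I_N}} := [set s | in_parts X s].
Definition U (P : {set {perm 'I_N}}) : {perm 'I_N} -> R :=
  fun s => (s \in P)%:R / #|P|%:R.

Lemma sum_ind (P : {set {perm 'I_N}}) (a : pred {perm 'I_N}) :
  \sum_(s | a s) ((s \in P)%:R : R) = #|[set s in P | a s]|%:R.
Proof.
rewrite (eq_bigr (fun s => if s \in P then 1 else 0)); last by move=> s _; case: (s \in P).
rewrite -big_mkcondr /= sumr_const; congr (_ *+ _).
by apply: eq_card => s; rewrite !inE andbC.
Qed.

Lemma prob_part_U (P : {set {perm 'I_N}}) (X : {set 'I_N * 'I_N}) : prob_part (U P) X = #|P :&: ext X|%:R / #|P|%:R.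
Proof.
rewrite /prob_part /U -mulr_suml sum_ind; congr (_%:R / _).
by apply: eq_card => s; rewrite !inE.
Qed.

Lemma perm_dist_U (P : {set {perm 'I_N}}) : P != set0 -> perm_dist (U P).
Proof.
move=> hP; split => [s|]; first by rewrite /U divr_ge0.
rewrite /U -mulr_suml.
have -> : \sum_(s : {perm 'I_N}) ((s \in P)%:R : R) = \sum_(s | predT s) ((s \in P)%:R : R) by [].
rewrite sum_ind.
have -> : [set s in P | predT s] = P by apply/setP => s; rewrite !inE andbT.
by rewrite divff // pnatr_eq0 -lt0n card_gt0.
Qed.

Lemma in_partsU (X Y : {set 'I_N * 'I_N}) (s : {perm 'I_N}) : in_parts (X :|: Y) s = in_parts X s && in_parts Y s.
Proof.
rewrite /in_parts; apply/idP/andP => [/forall_inP H|[/forall_inP H1 /forall_inP H2]].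
  by split; apply/forall_inP => xy xyin; apply: H; rewrite inE xyin ?orbT.
by apply/forall_inP => xy; rewrite inE => /orP[]; auto.
Qed.

Lemma card_ext (X : {set 'I_N * 'I_N}) : is_part X -> (#|ext X| <= (N - #|X|)`!)%N.
Proof.
case/existsP => s0 Hs0.
set I := [set xy.1 | xy in X].
have cI : #|I| = #|X|.
  apply: card_in_imset => a b aX bX /= eab.
  have /eqP ha := forall_inP Hs0 a aX; have /eqP hb := forall_inP Hs0 b bX.
  move: ha hb eab; case: a {aX} => a1 a2; case: b {bX} => b1 b2 /= <- <- ->.
  by [].
have sub : [set (s * s0^-1)%g | s in ext X] \subset perm_on (~: I).
  apply/subsetP => _ /imsetP [s sX ->]; apply/subsetP => x; rewrite inE => Hx.
  rewrite inE; apply: contra Hx => /imsetP [xy xyX ->].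
  rewrite permM; rewrite inE in sX.
  have /eqP -> := forall_inP sX xy xyX.
  have /eqP <- := forall_inP Hs0 xy xyX.
  by rewrite permK.
rewrite -(card_imset _ (mulIg s0^-1%g)); apply: (leq_trans (subset_leq_card sub)).
rewrite card_perm.
have -> : #|~: I| = (N - #|X|)%N.
  by have := cardsC I; rewrite card_ord cI; lia.
by [].
Qed.

Lemma pow2_le (a b : R) : a <= b -> powR 2 a <= powR 2 b.
Proof. by apply: ler_powR; rewrite ler1n. Qed.

Lemma pow2_lt (a b : R) : powR 2 a < powR 2 b -> a < b.
Proof.
move=> h; rewrite ltNge; apply/negP => ba; have := @pow2_le b a ba; by rewrite leNgt h.
Qed.

Lemma pow2_gt1 (x : R) : 0 < x -> 1 < powR 2 x.
Proof.
by move=> x0; rewrite /powR pnatr_eq0 /= expR_gt1 mulr_gt0 // ln_gt0 // ltr1n.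
Qed.


Lemma arith1 (a b q x y f1 f2 F : R) : 0 < b -> 0 < q -> 0 < x -> 0 < f1 -> 0 < F ->
  0 <= a -> 0 <= y -> 0 <= f2 ->
  a / b <= y * x * (f2 / F) -> x * (f1 / F) < q / b -> a / q <= y * (f2 / f1).
Proof.
move=> b0 q0 x0 f10 F0 a0 y0 f20 h1 h2.
have -> : a / q = (a / b) / (q / b) by field; rewrite !gt_eqF.
have v0 : 0 < q / b by rewrite divr_gt0.
have w0 : 0 < x * (f1 / F) by rewrite !mulr_gt0 // invr_gt0.
apply: (le_trans (y := (y * x * (f2 / F)) / (q / b))).
  by rewrite ler_pM2r // invr_gt0.
apply: (le_trans (y := (y * x * (f2 / F)) / (x * (f1 / F)))).
  apply: ler_wpM2l; first by rewrite !mulr_ge0 // ?invr_ge0 ltW.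
  by rewrite lef_pV2 // ltW.
by rewrite le_eqVlt; apply/orP; left; apply/eqP; field; rewrite !gt_eqF.
Qed.

Variables (delta p : R).
Hypothesis hd : 0 < delta.
Hypothesis hp : 0 <= p.

Definition viol (B : {set {perm 'I_N}}) (X : {set 'I_N * 'I_N}) : bool :=
  powR 2 (delta * #|X|%:R) * ((N - #|X|)`!%:R / N`!%:R) < #|B :&: ext X|%:R / #|B|%:R.


Lemma Fpos : (0 : R) < N`!%:R.
Proof. by rewrite ltr0n fact_gt0. Qed.

Lemma viol_pos (B : {set {perm 'I_N}}) (X : {set 'I_N * 'I_N}) : viol B X -> (0 < #|B :&: ext X|)%N.
Proof.
rewrite /viol lt0n; apply: contraL => /eqP ->; rewrite mul0r -leNgt.
by rewrite mulr_ge0 ?powR_ge0 // divr_ge0.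
Qed.

Lemma piece_ok (B : {set {perm 'I_N}}) (S : {set 'I_N * 'I_N}) : N`!%:R <= powR 2 (delta * p) * #|B|%:R -> viol B S ->
  (forall X, viol B X -> (#|X| <= #|S|)%N) -> pd_nonuniform p delta (U (B :&: ext S)).
Proof.
move=> hB vS maxS.
set P := B :&: ext S.
have P0 : (0 < #|P|)%N by apply: viol_pos.
have B0 : (0 < #|B|)%N.
  by apply: (leq_trans P0); apply: subset_leq_card; apply: subsetIl.
have [s0 s0P] : exists s0, s0 \in P by apply/set0Pn; rewrite -card_gt0.
have partS : is_part S.
  by apply/existsP; exists s0; move: s0P; rewrite !inE => /andP[].
exists S; split => //.
- have cP : (#|P| <= (N - #|S|)`!)%N.
    apply: (leq_trans _ (card_ext partS)); apply: subset_leq_card; apply: subsetIr.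
  have hx : powR 2 (delta * #|S|%:R) < powR 2 (delta * p).
    move: vS; rewrite /viol -/P => vS.
    have f10 : (0 : R) < (N - #|S|)`!%:R by rewrite ltr0n fact_gt0.
    have h2 : #|P|%:R / #|B|%:R <= ((N - #|S|)`!%:R : R) / #|B|%:R.
      by rewrite ler_pM2r ?invr_gt0 ?ltr0n // ler_nat.
    have := lt_le_trans vS h2.
    have -> : powR 2 (delta * #|S|%:R) * ((N - #|S|)`!%:R / N`!%:R)
        = (powR 2 (delta * #|S|%:R) / N`!%:R) * (N - #|S|)`!%:R by ring.
    have -> : ((N - #|S|)`!%:R : R) / #|B|%:R = #|B|%:R^-1 * (N - #|S|)`!%:R by ring.
    rewrite ltr_pM2r // ltr_pdivrMr ?Fpos // => h3.
    apply: (lt_le_trans h3).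
    rewrite mulrC -ler_pdivlMr ?invr_gt0 ?ltr0n //.
    have -> : forall z w : R, z / w^-1 = z * w by move=> z w; rewrite invrK.
    by [].
  have := pow2_lt hx; rewrite ltr_pM2l // => h; exact: ltW.
- rewrite prob_part_U.
  have -> : P :&: ext S = P by rewrite /P -setIA setIid.
  by rewrite divff // pnatr_eq0 -lt0n.
- move=> S' partS' /andP [/forall_inP disj partU].
  have [-> | S'0] := eqVneq S' set0.
    rewrite prob_part_U.
    have -> : P :&: ext set0 = P.
      apply/setP => s; rewrite !inE andbC.
      by have -> : in_parts set0 s by apply/forall_inP => xy; rewrite inE.
    rewrite divff ?pnatr_eq0 -?lt0n // /unif_cond cards0 mulr0 powRr0 subn0 mul1r.
    by rewrite divff // pnatr_eq0 -lt0n fact_gt0.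
  set Y := S :|: S'.
  have cY : #|Y| = (#|S| + #|S'|)%N.
    rewrite cardsU.
    have -> : S :&: S' = set0.
      apply/setP => xy; rewrite !inE; apply/negP => /andP [h1 h2].
      by have := forall_inP (disj xy h2) xy h1; rewrite eqxx.
    by rewrite cards0 subn0.
  have nv : ~~ viol B Y.
    apply/negP => /maxS; rewrite cY -{2}(addn0 #|S|) leq_add2l leqn0 cards_eq0.
    by rewrite (negbTE S'0).
  rewrite /viol -leNgt in nv.
  rewrite prob_part_U.
  have -> : P :&: ext S' = B :&: ext Y.
    by apply/setP => s; rewrite !inE in_partsU andbA.
  rewrite /unif_cond.
  rewrite cY natrD mulrDr powRD ?pnatr_eq0 ?implybT // in nv.
  rewrite subnDA in nv.
  move: vS; rewrite /viol -/P => vS.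
  rewrite (mulrC (2 `^ (delta * #|S|%:R))) in nv.
  apply: arith1 nv vS; rewrite ?ltr0n ?fact_gt0 ?powR_gt0 ?Fpos ?ler0n ?powR_ge0 //.
Qed.

Lemma nonviol_ok (B : {set {perm 'I_N}}) : B != set0 -> (forall X, ~~ viol B X) -> pd_nonuniform p delta (U B).
Proof.
move=> B0 nv; exists set0; split.
- by apply/existsP; exists 1%g; apply/forall_inP => xy; rewrite inE.
- by rewrite cards0.
- rewrite prob_part_U.
  have -> : B :&: ext set0 = B.
    apply/setP => s; rewrite !inE andbC.
    by have -> : in_parts set0 s by apply/forall_inP => xy; rewrite inE.
  by rewrite divff // pnatr_eq0 -lt0n card_gt0.
- move=> S _ _; have := nv S; rewrite /viol -leNgt prob_part_U /unif_cond cards0 !subn0.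
  by [].
Qed.


Lemma decomp (B : {set {perm 'I_N}}) : exists (Ps : seq {set {perm 'I_N}}) (L : {set {perm 'I_N}}),
 [/\ L == set0 \/ powR 2 (delta * p) * #|L|%:R < N`!%:R,
     forall P, P \in Ps -> P != set0 /\ pd_nonuniform p delta (U P),
     (\sum_(P <- Ps) #|P| + #|L| = #|B|)%N &
     forall s, ((s \in B)%:R : R) = \sum_(P <- Ps) (s \in P)%:R + (s \in L)%:R].
Proof.
have [k] := ubnP #|B|; elim: k B => // k IH B hk.
have [small | big] := ltP (powR 2 (delta * p) * #|B|%:R) N`!%:R.
  exists [::], B; split => //; [by right | by rewrite big_nil | by move=> s; rewrite big_nil add0r].
have B0 : B != set0.
  apply/negP => /eqP B0; move: big; rewrite B0 cards0 mulr0 leNgt.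
  by rewrite Fpos.
case: (pickP (viol B)) => [X0 vX0 | noviol]; last first.
  exists [:: B], set0; split.
  - by left.
  - move=> P; rewrite inE => /eqP ->; split => //.
    by apply: nonviol_ok => // X; rewrite noviol.
  - by rewrite big_seq1 cards0 addn0.
  - by move=> s; rewrite big_seq1 inE addr0.
case: (arg_maxnP (fun X : {set 'I_N * 'I_N} => #|X|) vX0) => S vS maxS.
set P := B :&: ext S.
set Rest := B :\: ext S.
have P0 := viol_pos vS.
have hR : (#|Rest| < k)%N.
  have := cardsID (ext S) B; rewrite -/P -/Rest => e.
  by move: hk P0; rewrite -e -/P; lia.
have [Ps [L [hL hPs hsum hs]]] := IH Rest hR.
exists (P :: Ps), L; split => //.
- move=> Q; rewrite inE => /orP [/eqP -> | /hPs //]; split.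
    by rewrite -card_gt0.
  by apply: piece_ok.
- by rewrite big_cons -addnA hsum cardsID.
- move=> s; rewrite big_cons -addrA -hs /P /Rest !inE.
  by case: (s \in B); case: (in_parts S s); rewrite ?addr0 ?add0r.
Qed.

End Helpers.

Lemma arith3 (R : realFieldType) (L A F z : R) : 0 < z -> 0 < F -> z * z * L < F ->
  z^-1 <= A / F -> L <= z^-1 * A.
Proof.
move=> z0 F0 h1 h2.
have Fz : 0 < F * z by rewrite mulr_gt0.
rewrite -(ler_pM2r Fz) in h2.
have e1 : z^-1 * (F * z) = F by field; rewrite gt_eqF.
have e2 : A / F * (F * z) = A * z by field; rewrite gt_eqF.
rewrite e1 e2 in h2.
have h4 : z * (z * L) < z * A by rewrite mulrA (lt_le_trans h1) // mulrC.
rewrite ltr_pM2l // in h4.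
rewrite -(ler_pM2l z0) mulrA mulfV ?gt_eqF // mul1r ltW //.
Qed.

Unset Implicit Arguments. Set Strict Implicit.

Theorem mainTheorem7 (R : realType) (n : nat) (T : eqType)
  (g : {perm 'I_(2 ^ n)} -> T) (r' : T) (delta m : R) :
  0 < delta ->
  prob_eq R g r' >= powR 2 (- m) ->
  exists (k : nat) (F : 'I_k -> {perm 'I_(2 ^ n)} -> R) (alpha : 'I_k -> R)
         (F' : {perm 'I_(2 ^ n)} -> R) (gamma' : R),
    [/\ forall i, perm_dist (F i) /\ pd_nonuniform (2 * m / delta) delta (F i),
        perm_dist F',
        ((forall i, 0 <= alpha i) /\ 0 <= gamma') /\
        \sum_(i < k) alpha i + gamma' = 1,
        gamma' <= powR 2 (- m) &
        forall s, cond_unif R g r' s = \sum_(i < k) alpha i * F i s + gamma' * F' s].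
Proof.
move=> hd hprob.
set N := (2 ^ n)%N.
set A := [set s : {perm 'I_N} | g s == r'].
have FN := @Fpos R N.
have hpe : prob_eq R g r' = #|A|%:R / N`!%:R by [].
rewrite hpe in hprob.
have A0 : (0 < #|A|)%N.
  rewrite lt0n; apply/negP => /eqP A0; move: hprob; rewrite A0 mul0r leNgt.
  by rewrite powR_gt0.
have AF : (#|A| <= N`!)%N by rewrite -card_Sn max_card.
have hm : 0 <= m.
  rewrite leNgt; apply/negP => m0.
  have := pow2_gt1 (x := - m); rewrite oppr_gt0 => /(_ m0) h.
  have : #|A|%:R / N`!%:R <= (1 : R) by rewrite ler_pdivrMr // mul1r ler_nat.
  by rewrite leNgt (lt_le_trans h hprob).
set p := 2 * m / delta.
have hp : 0 <= p by rewrite /p divr_ge0 ?mulr_ge0 // ltW.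
have hdp : delta * p = m + m by rewrite /p; field; rewrite gt_eqF.
have [Ps [L [hL hPs hsum hs]]] := decomp hd hp A.
have z0 : 0 < powR 2 m by rewrite powR_gt0.
have Apos : (0 : R) < #|A|%:R by rewrite ltr0n.
exists (size Ps), (fun i => U R (nth set0 Ps i)),
  (fun i => #|nth set0 Ps i|%:R / #|A|%:R),
  (if L == set0 then U R [set: {perm 'I_N}] else U R L), (#|L|%:R / #|A|%:R).
have nthP (i : 'I_(size Ps)) : nth set0 Ps i \in Ps by rewrite mem_nth.
have sumnth (G : {set {perm 'I_N}} -> R) :
    \sum_(i < size Ps) G (nth set0 Ps i) = \sum_(P <- Ps) G P.
  by rewrite (big_nth set0) big_mkord.
split.
- move=> i; have [h1 h2] := hPs _ (nthP i); split => //.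
  exact: perm_dist_U.
- case: ifP => [_ | /negbT L0]; apply: perm_dist_U => //.
  by apply/set0Pn; exists 1%g; rewrite inE.
- split; first by split => [i|]; rewrite divr_ge0.
  rewrite -mulr_suml -mulrDl (sumnth (fun P => #|P|%:R)) -natr_sum -natrD hsum divff //.
  by rewrite gt_eqF.
- have [-> | L0] := eqVneq L set0; first by rewrite cards0 mul0r powR_ge0.
  case: hL => [hL0 | hL]; first by rewrite hL0 in L0.
  rewrite hdp powRD ?pnatr_eq0 ?implybT // in hL.
  rewrite powRN in hprob; rewrite powRN ler_pdivrMr //.
  exact: arith3 z0 FN hL hprob.
- move=> s.
  have e1 : forall i : 'I_(size Ps),
      #|nth set0 Ps i|%:R / #|A|%:R * U R (nth set0 Ps i) s
      = (s \in nth set0 Ps i)%:R / #|A|%:R.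
    move=> i; have [h1 _] := hPs _ (nthP i).
    rewrite /U; field; rewrite ?gt_eqF // ltr0n card_gt0 //.
  rewrite (eq_bigr _ (fun i _ => e1 i)) -mulr_suml.
  have -> : #|L|%:R / #|A|%:R * (if L == set0 then U R [set: {perm 'I_N}] else U R L) s
      = (s \in L)%:R / #|A|%:R.
    case: eqP => [-> | /eqP L0]; first by rewrite cards0 inE !mul0r.
    rewrite /U; field; rewrite ?gt_eqF // ltr0n card_gt0 //.
  rewrite -mulrDl (sumnth (fun P => ((s \in P)%:R : R))) -hs.
  by rewrite /cond_unif inE.
Qed.
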